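(* Let $q\in\mathbb{C}$ with $|q|<1$, $r\in\mathbb{N}$, $n\in\mathbb{Z}_{+}=\{0,1,2,\dots\}$, $x$ real with $x\neq0,-1,-2,\dots$, and let $\chi$ be a Dirichlet character with conductor $f\in\mathbb{N}$, $f$ odd. Then $$E_{n,\chi,q}^{(r)}(x)=[f]_q^n\left(\frac{[2]_q}{[2]_{q^f}}\right)^r\sum_{a_1,\dots,a_r=0}^{f-1}\left(\prod_{j=1}^r\chi(a_j)\right)(-1)^{\sum_{j=1}^r a_j}E_{n,q^f}^{(r)}\!\left(\frac{x+\sum_{j=1}^r a_j}{f}\right),$$ and $$E_{n,\chi,q}^{(r)}(x)=\frac{[2]_q^r}{(1-q)^n}\sum_{l=0}^{n}\binom{n}{l}(-q^x)^l\sum_{a_1,\dots,a_r=0}^{f-1}\frac{\left(\prod_{j=1}^r\chi(a_j)\right)(-q^l)^{\sum_{i=1}^r a_i}}{(1+q^{lf})^r}.$$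
   Context: For a complex number $q$ with $|q|<1$ and $x$ real, $[x]_q=\frac{1-q^x}{1-q}$ (so $[2]_q=1+q$). For $r\in\mathbb{N}$, the $q$-Euler polynomials of order $r$ are defined by $$[2]_q^r\sum_{m_1,\dots,m_r=0}^{\infty}(-1)^{m_1+\cdots+m_r}e^{[m_1+\cdots+m_r+x]_q t}=\sum_{n=0}^{\infty}E_{n,q}^{(r)}(x)\frac{t^n}{n!},$$ with $E_{n,q^f}^{(r)}$ the same with $q$ replaced by $q^f$. The generalized $q$-Euler polynomials of order $r$ attached to $\chi$ are defined by $$[2]_q^r\sum_{m_1,\dots,m_r=0}^{\infty}(-1)^{m_1+\cdots+m_r}\left(\prod_{j=1}^r\chi(m_j)\right)e^{[x+m_1+\cdots+m_r]_q t}=\sum_{n=0}^{\infty}E_{n,\chi,q}^{(r)}(x)\frac{t^n}{n!}.$$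
   Formalization: Both $E_{n,\chi,q}^{(r)}(x)$ and $E_{n,q}^{(r)}(x)$ are Abel sums, the limits as s→1⁻ of $[2]_q^r\sum(-s)^{m_1+\cdots+m_r}\left(\prod_{j=1}^r\chi(m_j)\right)[x+m_1+\cdots+m_r]_q^n$ (χ=1 for the latter), in place of the n-th coefficients of the generating series. The statement above fails without it. *)

(* Defs.v *)
From Stdlib Require Import Reals ClassicalEpsilon Arith.
From Coquelicot Require Import Coquelicot.
Open Scope R_scope.

Definition cexp (z : C) : C :=
  (exp (Re z) * cos (Im z), exp (Re z) * sin (Im z)).

(** A complex q with |q| < 1 is given together with a chosen logarithm L
    (q = cexp L, Re L < 0); real powers are q^y := cexp (y L), and q^f has
    logarithm f L. *)
Definition qpow (L : C) (y : R) : C := cexp (Cmult (RtoC y) L).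

Definition qint (L : C) (y : R) : C :=
  Cdiv (Cminus (RtoC 1) (qpow L y)) (Cminus (RtoC 1) (cexp L)).

(** Value of a convergent complex series (junk if it diverges). *)
Definition csum (a : nat -> C) : C :=
  epsilon (inhabits (RtoC 0)) (fun v => @is_series C_AbsRing C_NormedModule a v).

(** Left limit at 1 of a complex function of a real variable (junk if none). *)
Definition lim_left1 (g : R -> C) : C :=
  epsilon (inhabits (RtoC 0)) (fun v => filterlim g (at_left 1) (locally v)).

(** Iterated multiple series with Abel factor s:
    msum chi s r g y = sum_{m_1,...,m_r >= 0} (-s)^(m_1+..+m_r)
                        (prod_j chi m_j) g (y + m_1 + ... + m_r). *)
Fixpoint msum (chi : nat -> C) (s : R) (r : nat) (g : R -> C) (y : R) : C :=
  match r with
  | O => g y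
  | S r' => csum (fun m => Cmult (RtoC ((- s) ^ m))
                     (Cmult (chi m) (msum chi s r' g (y + INR m))))
  end.

(** Generalized q-Euler polynomials of order r attached to chi: the n-th
    coefficient of the generating function, i.e.
    [2]_q^r sum_{m_1..m_r} (-1)^{sum m} (prod chi m_j) [x + sum m]_q^n,
    the (divergent) alternating multiple series being Abel-summed. *)
Definition qEulerChi (L : C) (r : nat) (chi : nat -> C) (n : nat) (x : R) : C :=
  Cmult (Cpow (qint L 2) r)
        (lim_left1 (fun s => msum chi s r (fun y => Cpow (qint L y) n) x)).

Definition qEuler (L : C) (r : nat) (n : nat) (x : R) : C :=
  qEulerChi L r (fun _ => RtoC 1) n x.

Definition fsum (N : nat) (a : nat -> C) : C :=
  List.fold_right Cplus (RtoC 0) (List.map a (List.seq 0 N)).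

Fixpoint fmsum (chi : nat -> C) (f : nat) (r : nat) (F : nat -> C) : C :=
  match r with
  | O => F O
  | S r' => fsum f (fun a => Cmult (chi a) (fmsum chi f r' (fun t => F (t + a)%nat)))
  end.

Definition dirichlet_char (f : nat) (chi : nat -> C) : Prop :=
  (0 < f)%nat /\
  (forall m, chi (m + f)%nat = chi m) /\
  (forall m k, chi (m * k)%nat = Cmult (chi m) (chi k)) /\
  chi 1%nat = RtoC 1 /\
  (forall m, chi m <> RtoC 0 <-> Nat.gcd m f = 1%nat).

(** chi has conductor f: a Dirichlet character mod f that is primitive,
    i.e. not induced by a character mod any proper divisor d of f. *)
Definition has_conductor (f : nat) (chi : nat -> C) : Prop :=
  dirichlet_char f chi /\
  forall d, Nat.divide d f -> (d < f)%nat ->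
    exists a b, Nat.gcd a f = 1%nat /\ Nat.gcd b f = 1%nat /\
      a mod d = b mod d /\ chi a <> chi b.

(* Main.v *)
Require Import Defs.
From Stdlib Require Import Reals Arith Lia Lra ClassicalEpsilon FunctionalExtensionality.
From Coquelicot Require Import Coquelicot.
Open Scope R_scope.

Lemma fsum_S N a : fsum (S N) a = Cplus (fsum N a) (a N).
Proof.
  unfold fsum. rewrite List.seq_S, List.map_app, List.fold_right_app. simpl.
  generalize (List.map a (List.seq 0 N)). induction l; simpl.
  - rewrite Cplus_0_l, Cplus_0_r; auto.
  - rewrite IHl. ring.
Qed.
Lemma fsum_0 a : fsum 0 a = RtoC 0. Proof. reflexivity. Qed.
Lemma fsum_ext N a b : (forall k, (k < N)%nat -> a k = b k) -> fsum N a = fsum N b.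
Proof. induction N; intros H; auto. rewrite !fsum_S, IHN, H; auto. Qed.
Lemma fsum_scal N a c : Cmult c (fsum N a) = fsum N (fun k => Cmult c (a k)).
Proof. induction N. simpl. unfold fsum; simpl; ring. rewrite !fsum_S, <- IHN. ring. Qed.
Lemma fsum_plus N a b : Cplus (fsum N a) (fsum N b) = fsum N (fun k => Cplus (a k) (b k)).
Proof. induction N. unfold fsum; simpl; ring. rewrite !fsum_S, <- IHN. ring. Qed.

Lemma fmsum_ext chi f r F G : (forall t, F t = G t) -> fmsum chi f r F = fmsum chi f r G.
Proof. intros H. f_equal. apply functional_extensionality; auto. Qed.

Lemma fmsum_scal chi f r F c : fmsum chi f r (fun t => Cmult c (F t)) = Cmult c (fmsum chi f r F).
Proof.
  revert F. induction r; intros F; simpl; auto.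
  rewrite fsum_scal. apply fsum_ext. intros k _. rewrite (IHr (fun t => F (t + k)%nat)). ring.
Qed.
Lemma fmsum_plus chi f r F G : fmsum chi f r (fun t => Cplus (F t) (G t)) = Cplus (fmsum chi f r F) (fmsum chi f r G).
Proof.
  revert F G. induction r; intros F G; simpl; auto.
  rewrite fsum_plus. apply fsum_ext. intros k _. rewrite (IHr (fun t => F (t + k)%nat)). ring.
Qed.
Lemma fmsum_zero chi f r : fmsum chi f r (fun _ => RtoC 0) = RtoC 0.
Proof.
  induction r; simpl; auto. transitivity (fsum f (fun a => Cmult (RtoC 0) (chi a))).
  apply fsum_ext; intros; rewrite IHr; ring. rewrite <- fsum_scal; ring.
Qed.
Lemma fmsum_fsum chi f r N F : fmsum chi f r (fun t => fsum N (fun l => F l t)) = fsum N (fun l => fmsum chi f r (F l)).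
Proof.
  induction N. apply fmsum_zero.
  rewrite fsum_S, <- IHN, <- fmsum_plus. apply fmsum_ext. intros; now rewrite fsum_S.
Qed.
Lemma Cpow_add u a b : Cpow u (a + b) = Cmult (Cpow u a) (Cpow u b).
Proof. induction a; simpl. ring. rewrite IHa; ring. Qed.
Lemma fmsum_geom chi f r c u : fmsum chi f r (fun t => Cmult c (Cpow u t)) = Cmult c (Cpow (fsum f (fun a => Cmult (chi a) (Cpow u a))) r).
Proof.
  revert c. induction r; intros c; simpl. ring.
  transitivity (fsum f (fun a => Cmult (Cmult c (Cpow (fsum f (fun a => Cmult (chi a) (Cpow u a))) r)) (Cmult (chi a) (Cpow u a)))).
  - apply fsum_ext; intros k _.
    rewrite (fmsum_ext chi f r _ (fun t => Cmult (Cmult c (Cpow u k)) (Cpow u t))).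
    rewrite IHr. ring. intros t. rewrite Cpow_add. ring.
  - rewrite <- fsum_scal. ring.
Qed.

Lemma fsum_shift N a : fsum (S N) a = Cplus (a O) (fsum N (fun k => a (S k))).
Proof.
  induction N. unfold fsum; simpl; ring.
  rewrite fsum_S, IHN, fsum_S. ring.
Qed.
Lemma binC_n0 n : Binomial.C n 0 = 1.
Proof. unfold Binomial.C. rewrite Nat.sub_0_r. simpl. field. apply INR_fact_neq_0. Qed.
Lemma binC_nn n : Binomial.C n n = 1.
Proof. unfold Binomial.C. rewrite Nat.sub_diag. simpl. field. apply INR_fact_neq_0. Qed.

Lemma Cbinom n u : Cpow (Cplus (RtoC 1) u) n = fsum (S n) (fun l => Cmult (RtoC (Binomial.C n l)) (Cpow u l)).
Proof.
  induction n.
  - unfold fsum; simpl. rewrite binC_n0. ring.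
  - change (Cpow (Cplus (RtoC 1) u) (S n)) with (Cmult (Cplus (RtoC 1) u) (Cpow (Cplus (RtoC 1) u) n)).
    rewrite IHn.
    rewrite Cmult_plus_distr_r, Cmult_1_l, fsum_scal.
    rewrite (fsum_ext (S n) (fun k => Cmult u _) (fun l => Cmult (RtoC (Binomial.C n l)) (Cpow u (S l))))
      by (intros; simpl; ring).
    rewrite (fsum_S n (fun l => Cmult (RtoC (Binomial.C n l)) (Cpow u (S l)))).
    rewrite (fsum_shift n), binC_n0, binC_nn.
    rewrite (fsum_shift (S n)), fsum_S, binC_n0, binC_nn.
    transitivity (Cplus (Cplus (RtoC 1) (Cpow u (S n)))
      (Cplus (fsum n (fun k => Cmult (RtoC (Binomial.C n (S k))) (Cpow u (S k))))
             (fsum n (fun l => Cmult (RtoC (Binomial.C n l)) (Cpow u (S l)))))).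
    { simpl Cpow. ring. }
    rewrite fsum_plus.
    rewrite (fsum_ext n _ (fun k => Cmult (RtoC (Binomial.C (S n) (S k))) (Cpow u (S k)))).
    simpl Cpow. ring.
    intros k Hk. rewrite <- pascal by auto. rewrite RtoC_plus. ring.
Qed.

Lemma cexp_add a b : cexp (Cplus a b) = Cmult (cexp a) (cexp b).
Proof.
  destruct a as [a1 a2], b as [b1 b2]. unfold cexp; simpl.
  rewrite exp_plus, cos_plus, sin_plus.
  apply injective_projections; simpl; ring.
Qed.
Lemma cexp_0 : cexp (RtoC 0) = RtoC 1.
Proof. unfold cexp; simpl. rewrite exp_0, cos_0, sin_0. apply injective_projections; simpl; ring. Qed.
Lemma cexp_nat k z : cexp (Cmult (RtoC (INR k)) z) = Cpow (cexp z) k.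
Proof.
  induction k.
  - simpl. rewrite Cmult_0_l. apply cexp_0.
  - rewrite S_INR, RtoC_plus, Cmult_plus_distr_r, Cmult_1_l, cexp_add, IHk. simpl; ring.
Qed.
Lemma Cmod_cexp z : Cmod (cexp z) = exp (Re z).
Proof.
  unfold cexp, Cmod; simpl.
  replace (exp (Re z) * cos (Im z) * (exp (Re z) * cos (Im z) * 1) +
     exp (Re z) * sin (Im z) * (exp (Re z) * sin (Im z) * 1)) with (Rsqr (exp (Re z)) * (Rsqr (sin (Im z)) + Rsqr (cos (Im z)))) by (unfold Rsqr; ring).
  rewrite sin2_cos2, Rmult_1_r.
  rewrite sqrt_Rsqr; auto. left; apply exp_pos.
Qed.
Lemma qpow_add L y m : qpow L (y + INR m) = Cmult (qpow L y) (Cpow (cexp L) m).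
Proof.
  unfold qpow. rewrite RtoC_plus, Cmult_plus_distr_r, cexp_add, cexp_nat. reflexivity.
Qed.
Lemma Cmod_cexpL L : Re L < 0 -> Cmod (cexp L) < 1.
Proof. intros H. rewrite Cmod_cexp. rewrite <- exp_0. apply exp_increasing. auto. Qed.

Definition Tser (chi : nat -> C) (P : nat) (u : C) : C :=
  Cdiv (fsum P (fun a => Cmult (chi a) (Cpow u a))) (Cminus (RtoC 1) (Cpow u P)).

Lemma is_series_uniq (a : nat -> C) (l1 l2 : C) :
  @is_series C_AbsRing C_NormedModule a l1 -> @is_series C_AbsRing C_NormedModule a l2 -> l1 = l2.
Proof.
  intros H1 H2. eapply (filterlim_locally_unique (F:=eventually)); eauto.
Qed.

Lemma chi_per_mult (chi : nat -> C) P : (forall m, chi (m + P)%nat = chi m) -> forall q r, chi (r + q * P)%nat = chi r.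
Proof.
  intros H q; induction q; intros r. now rewrite Nat.mul_0_l, Nat.add_0_r.
  replace (r + S q * P)%nat with ((r + q * P) + P)%nat by lia. rewrite H; auto.
Qed.

Lemma chi_bounded (chi : nat -> C) P : (0 < P)%nat -> (forall m, chi (m + P)%nat = chi m) ->
  exists B, 0 <= B /\ forall m, Cmod (chi m) <= B.
Proof.
  intros HP Hper.
  assert (Hb : forall N, exists B, 0 <= B /\ forall a, (a < N)%nat -> Cmod (chi a) <= B).
  { induction N. exists 0. split. lra. intros; lia.
    destruct IHN as [B [HB0 HB]]. exists (Rmax B (Cmod (chi N))). split.
    apply Rle_trans with B; auto; apply Rmax_l.
    intros a Ha. destruct (Nat.eq_dec a N). subst; apply Rmax_r.
    apply Rle_trans with B. apply HB; lia. apply Rmax_l. }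
  destruct (Hb P) as [B [HB0 HB]]. exists B; split; auto.
  intros m. rewrite (Nat.div_mod m P) by lia.
  rewrite Nat.add_comm, Nat.mul_comm, chi_per_mult by auto. apply HB. apply Nat.mod_upper_bound; lia.
Qed.

Lemma sum_n_fsum (a : nat -> C) N : @sum_n C_AbelianMonoid a N = fsum (S N) a.
Proof.
  induction N. rewrite sum_O. unfold fsum; simpl. rewrite Cplus_0_r; auto.
  rewrite sum_Sn, IHN, (fsum_S (S N)). reflexivity.
Qed.

Lemma Caux1 (x y : C) : x = Cplus (Cminus x y) y. Proof. ring. Qed.

Lemma series_T (chi : nat -> C) P u : (0 < P)%nat -> (forall m, chi (m + P)%nat = chi m) -> Cmod u < 1 ->
  @is_series C_AbsRing C_NormedModule (fun m => Cmult (Cpow u m) (chi m)) (Tser chi P u).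
Proof.
  intros HP Hper Hu.
  destruct (chi_bounded chi P HP Hper) as [B [HB0 HB]].
  set (a := fun m => Cmult (Cpow u m) (chi m)).
  assert (Hex : @ex_series C_AbsRing C_NormedModule a).
  { apply (ex_series_le a (fun m => B * Cmod u ^ m)).
    - intros m. change (Cmod (a m) <= B * Cmod u ^ m). unfold a. rewrite Cmod_mult, Cmod_pow.
      rewrite Rmult_comm. apply Rmult_le_compat_r. apply pow_le, Cmod_ge_0. apply HB.
    - exists (B * / (1 - Cmod u)). apply (is_series_scal (K:=R_AbsRing) (V:=R_NormedModule) B (fun m => Cmod u ^ m)).
      apply is_series_geom. rewrite Rabs_pos_eq; auto. apply Cmod_ge_0. }
  destruct Hex as [Sv HS].
  assert (Hsh : @is_series C_AbsRing C_NormedModule (fun k => a (P + k)%nat) (Cminus Sv (fsum P (fun k => Cmult (chi k) (Cpow u k))))).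
  { apply is_series_incr_n; auto.
    match goal with |- is_series _ ?l => replace l with Sv; [exact HS|] end.
    change (sum_n a (Init.Nat.pred P)) with (@sum_n C_AbelianMonoid a (Init.Nat.pred P)).
    rewrite sum_n_fsum. replace (S (Init.Nat.pred P)) with P by lia.
    rewrite (fsum_ext P a (fun k => Cmult (chi k) (Cpow u k))) by (intros; unfold a; ring).
    change (@eq C Sv (Cplus (Cminus Sv (fsum P (fun k => Cmult (chi k) (Cpow u k)))) (fsum P (fun k => Cmult (chi k) (Cpow u k))))). apply Caux1. }
  assert (Hsc : @is_series C_AbsRing C_NormedModule (fun k => a (P + k)%nat) (Cmult (Cpow u P) Sv)).
  { apply (is_series_ext (fun k => @scal C_AbsRing C_NormedModule (Cpow u P) (a k))).
    intros k. change (@eq C (Cmult (Cpow u P) (a k)) (a (P+k)%nat)). unfold a. rewrite Cpow_add. rewrite Nat.add_comm, Hper. ring.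
    exact (@is_series_scal C_AbsRing C_NormedModule (Cpow u P) a Sv HS). }
  pose proof (is_series_uniq _ _ _ Hsh Hsc) as E.
  assert (Hnz : Cminus (RtoC 1) (Cpow u P) <> RtoC 0).
  { intros Hc. apply Ceq_minus in Hc. assert (H1 : Cmod (Cpow u P) = 1) by (rewrite <- Hc; apply Cmod_1).
    rewrite Cmod_pow in H1. assert (Cmod u ^ P < 1). apply pow_lt_1_compat; auto. split; auto. apply Cmod_ge_0.
    lra. }
  assert (Hgen : forall z : C, Cminus z (fsum P (fun k => Cmult (chi k) (Cpow u k))) = Cmult (Cpow u P) z -> z = Tser chi P u).
  { intros z Hz. unfold Tser, Cdiv.
    assert (HF : fsum P (fun k => Cmult (chi k) (Cpow u k)) = Cmult z (Cminus (RtoC 1) (Cpow u P))).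
    { transitivity (Cminus z (Cminus z (fsum P (fun k => Cmult (chi k) (Cpow u k))))). ring. rewrite Hz. ring. }
    rewrite HF. field. auto. }
  rewrite <- (Hgen Sv E). exact HS.
Qed.

Lemma csum_eq (a : nat -> C) v : @is_series C_AbsRing C_NormedModule a v -> csum a = v.
Proof.
  intros H. unfold csum. apply (is_series_uniq a). 2: exact H.
  apply (epsilon_spec (inhabits (RtoC 0)) (fun v => @is_series C_AbsRing C_NormedModule a v)). eauto.
Qed.

Lemma fsum_zero N : fsum N (fun _ => RtoC 0) = RtoC 0.
Proof. induction N; auto. rewrite fsum_S, IHN. ring. Qed.

Lemma is_series_zero : @is_series C_AbsRing C_NormedModule (fun _ => RtoC 0) (RtoC 0).
Proof.
  unfold is_series. apply filterlim_ext with (fun _ => RtoC 0).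
  intros n. change (RtoC 0 = @sum_n C_AbelianMonoid (fun _ => RtoC 0) n). rewrite sum_n_fsum, fsum_zero. auto.
  apply filterlim_const.
Qed.

Lemma is_series_fsum N (F : nat -> nat -> C) (v : nat -> C) :
  (forall l, (l < N)%nat -> @is_series C_AbsRing C_NormedModule (F l) (v l)) ->
  @is_series C_AbsRing C_NormedModule (fun m => fsum N (fun l => F l m)) (fsum N v).
Proof.
  induction N; intros H.
  - exact is_series_zero.
  - rewrite fsum_S. apply (is_series_ext (fun m => Cplus (fsum N (fun l => F l m)) (F N m))).
    intros; rewrite fsum_S; auto.
    exact (@is_series_plus C_AbsRing C_NormedModule _ _ _ _ (IHN (fun l Hl => H l (Nat.lt_lt_succ_r _ _ Hl))) (H N (Nat.lt_succ_diag_r N))).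
Qed.

Lemma Cpow_mul_l a b n : Cpow (Cmult a b) n = Cmult (Cpow a n) (Cpow b n).
Proof. induction n; simpl. ring. rewrite IHn; ring. Qed.
Lemma Cpow_pow w a b : Cpow (Cpow w a) b = Cpow w (a * b).
Proof. induction b; simpl. rewrite Nat.mul_0_r; auto. rewrite IHb, Nat.mul_succ_r, Nat.add_comm, Cpow_add. auto. Qed.

Lemma pow_le1 x n : 0 <= x <= 1 -> x ^ n <= 1.
Proof. intros H. induction n; simpl. lra. replace 1 with (1 * 1) by ring. apply Rmult_le_compat; try lra. apply pow_le; lra. Qed.

Lemma msum_exp (chi : nat -> C) P s (E : R -> C) (w : C) :
  (0 < P)%nat -> (forall m, chi (m + P)%nat = chi m) -> 0 <= s < 1 -> Cmod w <= 1 ->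
  (forall y m, E (y + INR m) = Cmult (E y) (Cpow w m)) ->
  forall r N K y, msum chi s r (fun y => fsum N (fun l => Cmult (K l) (Cpow (E y) l))) y =
    fsum N (fun l => Cmult (Cmult (K l) (Cpow (E y) l)) (Cpow (Tser chi P (Cmult (RtoC (- s)) (Cpow w l))) r)).
Proof.
  intros HP Hper Hs Hw HE r N K. induction r; intros y.
  - simpl. apply fsum_ext. intros; ring.
  - simpl msum. apply csum_eq.
    apply (is_series_ext (fun m => fsum N (fun l => Cmult (Cmult (Cmult (K l) (Cpow (E y) l)) (Cpow (Tser chi P (Cmult (RtoC (- s)) (Cpow w l))) r))
               (Cmult (Cpow (Cmult (RtoC (- s)) (Cpow w l)) m) (chi m))))).
    { intros m. rewrite IHr. rewrite !fsum_scal. apply fsum_ext. intros l _.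
      rewrite HE, !Cpow_mul_l, Cpow_pow, Cpow_pow, Nat.mul_comm, RtoC_pow. ring. }
    apply is_series_fsum. intros l _.
    apply (is_series_ext (fun m => @scal C_AbsRing C_NormedModule (Cmult (Cmult (K l) (Cpow (E y) l)) (Cpow (Tser chi P (Cmult (RtoC (- s)) (Cpow w l))) r))
               (Cmult (Cpow (Cmult (RtoC (- s)) (Cpow w l)) m) (chi m)))).
    { intros m. reflexivity. }
    replace (Cmult (Cmult (K l) (Cpow (E y) l)) (Cpow (Tser chi P (Cmult (RtoC (- s)) (Cpow w l))) (S r)))
      with (@scal C_AbsRing C_NormedModule (Cmult (Cmult (K l) (Cpow (E y) l)) (Cpow (Tser chi P (Cmult (RtoC (- s)) (Cpow w l))) r)) (Tser chi P (Cmult (RtoC (- s)) (Cpow w l)))).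
    2: { change (Cmult (Cmult (Cmult (K l) (Cpow (E y) l)) (Cpow (Tser chi P (Cmult (RtoC (- s)) (Cpow w l))) r)) (Tser chi P (Cmult (RtoC (- s)) (Cpow w l))) =
                  Cmult (Cmult (K l) (Cpow (E y) l)) (Cpow (Tser chi P (Cmult (RtoC (- s)) (Cpow w l))) (S r))). simpl; ring. }
    apply is_series_scal. apply series_T; auto.
    rewrite Cmod_mult, Cmod_pow, Cmod_R, Rabs_Ropp, Rabs_pos_eq by lra.
    apply Rle_lt_trans with (s * 1). apply Rmult_le_compat_l. lra.
    apply pow_le1. split; auto. apply Cmod_ge_0. lra.
Qed.

Definition ccont (f : R -> C) (x0 : R) := forall eps, 0 < eps -> exists d, 0 < d /\
  forall s, Rabs (s - x0) < d -> Cmod (Cminus (f s) (f x0)) < eps.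

Lemma ccont_const c x0 : ccont (fun _ => c) x0.
Proof. intros eps He. exists 1. split. lra. intros. replace (Cminus c c) with (RtoC 0) by ring. rewrite Cmod_0; auto. Qed.

Lemma ccont_RtoC x0 : ccont (fun s => RtoC s) x0.
Proof. intros eps He. exists eps. split; auto. intros s Hs. rewrite <- RtoC_minus, Cmod_R. auto. Qed.

Lemma Cmod_le_tri (a b : C) : Cmod a <= Cmod b + Cmod (Cminus a b).
Proof. replace a with (Cplus b (Cminus a b)) at 1 by ring. apply Cmod_triangle. Qed.

Lemma ccont_plus f g x0 : ccont f x0 -> ccont g x0 -> ccont (fun s => Cplus (f s) (g s)) x0.
Proof.
  intros Hf Hg eps He. destruct (Hf (eps/2)) as [d1 [Hd1 H1]]. lra. destruct (Hg (eps/2)) as [d2 [Hd2 H2]]. lra.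
  exists (Rmin d1 d2). split. apply Rmin_pos; auto. intros s Hs.
  replace (Cminus (Cplus (f s) (g s)) (Cplus (f x0) (g x0))) with (Cplus (Cminus (f s) (f x0)) (Cminus (g s) (g x0))) by ring.
  eapply Rle_lt_trans. apply Cmod_triangle.
  assert (Rabs (s - x0) < d1) by (eapply Rlt_le_trans; [apply Hs | apply Rmin_l]).
  assert (Rabs (s - x0) < d2) by (eapply Rlt_le_trans; [apply Hs | apply Rmin_r]).
  specialize (H1 s H). specialize (H2 s H0). lra.
Qed.

Lemma ccont_mult f g x0 : ccont f x0 -> ccont g x0 -> ccont (fun s => Cmult (f s) (g s)) x0.
Proof.
  intros Hf Hg eps He.
  set (A := Cmod (f x0) + 1). set (B := Cmod (g x0) + 1).
  assert (HA : 0 < A) by (unfold A; pose proof (Cmod_ge_0 (f x0)); lra).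
  assert (HB : 0 < B) by (unfold B; pose proof (Cmod_ge_0 (g x0)); lra).
  destruct (Hf (Rmin 1 (eps / (2 * B)))) as [d1 [Hd1 H1]].
  { apply Rmin_pos. lra. apply Rdiv_lt_0_compat; lra. }
  destruct (Hg (eps / (2 * A))) as [d2 [Hd2 H2]]. apply Rdiv_lt_0_compat; lra.
  exists (Rmin d1 d2). split. apply Rmin_pos; auto. intros s Hs.
  assert (Rabs (s - x0) < d1) by (eapply Rlt_le_trans; [apply Hs | apply Rmin_l]).
  assert (Rabs (s - x0) < d2) by (eapply Rlt_le_trans; [apply Hs | apply Rmin_r]).
  specialize (H1 s H). specialize (H2 s H0).
  pose proof (Rmin_l 1 (eps / (2 * B))). pose proof (Rmin_r 1 (eps / (2 * B))).
  replace (Cminus (Cmult (f s) (g s)) (Cmult (f x0) (g x0))) with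
     (Cplus (Cmult (f s) (Cminus (g s) (g x0))) (Cmult (Cminus (f s) (f x0)) (g x0))) by ring.
  eapply Rle_lt_trans. apply Cmod_triangle. rewrite !Cmod_mult.
  pose proof (Cmod_le_tri (f s) (f x0)).
  assert (Hfs : Cmod (f s) < A) by (unfold A; lra).
  assert (T1 : Cmod (f s) * Cmod (Cminus (g s) (g x0)) < eps / 2).
  { apply Rle_lt_trans with (A * Cmod (Cminus (g s) (g x0))).
    apply Rmult_le_compat_r. apply Cmod_ge_0. lra.
    replace (eps / 2) with (A * (eps / (2 * A))) by (field; lra). apply Rmult_lt_compat_l; auto. }
  assert (T2 : Cmod (Cminus (f s) (f x0)) * Cmod (g x0) <= eps / 2).
  { apply Rle_trans with ((eps / (2 * B)) * B).
    apply Rmult_le_compat. apply Cmod_ge_0. apply Cmod_ge_0. lra. unfold B; lra.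
    right. field. lra. }
  lra.
Qed.

Lemma ccont_pow f n x0 : ccont f x0 -> ccont (fun s => Cpow (f s) n) x0.
Proof. intros Hf. induction n; simpl. apply ccont_const. apply ccont_mult; auto. Qed.

Lemma ccont_fsum N (F : nat -> R -> C) x0 : (forall l, ccont (F l) x0) -> ccont (fun s => fsum N (fun l => F l s)) x0.
Proof.
  intros H. induction N. apply (ccont_const (RtoC 0)).
  replace (fun s => fsum (S N) (fun l => F l s)) with (fun s => Cplus (fsum N (fun l => F l s)) (F N s)).
  apply ccont_plus; auto. apply functional_extensionality; intros; now rewrite fsum_S.
Qed.

Lemma ccont_inv f x0 : ccont f x0 -> f x0 <> RtoC 0 -> ccont (fun s => Cinv (f s)) x0.
Proof.
  intros Hf Hnz eps He.
  set (a := Cmod (f x0)). assert (Ha : 0 < a) by (apply Cmod_gt_0; auto).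
  destruct (Hf (Rmin (a / 2) (eps * a * a / 2))) as [d [Hd H]].
  { apply Rmin_pos. lra. apply Rdiv_lt_0_compat; try lra. repeat apply Rmult_lt_0_compat; auto. }
  exists d; split; auto. intros s Hs. specialize (H s Hs).
  pose proof (Rmin_l (a / 2) (eps * a * a / 2)). pose proof (Rmin_r (a / 2) (eps * a * a / 2)).
  pose proof (Cmod_le_tri (f x0) (f s)).
  assert (Hop : Cmod (Cminus (f x0) (f s)) = Cmod (Cminus (f s) (f x0))).
  { rewrite <- Cmod_opp. f_equal. ring. }
  assert (Hfs : a / 2 < Cmod (f s)) by (fold a in H2; lra).
  assert (Hnz2 : f s <> RtoC 0). { intros Hc. rewrite Hc, Cmod_0 in Hfs. lra. }
  replace (Cminus (Cinv (f s)) (Cinv (f x0))) with (Cmult (Cminus (f x0) (f s)) (Cmult (Cinv (f s)) (Cinv (f x0)))) by (field; auto).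
  rewrite !Cmod_mult, !Cmod_inv by auto. fold a. rewrite Hop.
  assert (0 < Cmod (f s)) by lra.
  apply Rlt_le_trans with ((eps * a * a / 2) * (/ Cmod (f s) * / a)).
  apply Rmult_lt_compat_r. apply Rmult_lt_0_compat; apply Rinv_0_lt_compat; auto. lra.
  apply Rle_trans with ((eps * a * a / 2) * (/ (a/2) * / a)).
  apply Rmult_le_compat_l. apply Rlt_le. apply Rdiv_lt_0_compat; try lra. repeat apply Rmult_lt_0_compat; auto.
  apply Rmult_le_compat_r. apply Rlt_le, Rinv_0_lt_compat; auto.
  apply Rinv_le_contravar; lra.
  right. field. lra.
Qed.

Lemma ccont_limit f : ccont f 1 -> filterlim f (at_left 1) (locally (f 1)).
Proof.
  intros Hf. apply filterlim_locally. intros eps.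
  destruct (Hf eps (cond_pos eps)) as [d [Hd H]].
  exists (mkposreal d Hd). intros y Hy _. apply C_NormedModule_mixin_compat1. apply H. exact Hy.
Qed.

Lemma lim_left1_eq g v : filterlim g (at_left 1) (locally v) -> lim_left1 g = v.
Proof.
  intros H. unfold lim_left1.
  assert (He := epsilon_spec (inhabits (RtoC 0)) (fun v => filterlim g (at_left 1) (locally v)) (ex_intro _ v H)).
  assert (FF : ProperFilter' (at_left 1)) by (apply Proper_StrongProper, at_left_proper_filter).
  exact (@filterlim_locally_unique R C_AbsRing C_NormedModule (at_left 1) FF g _ _ He H).
Qed.

Lemma ccont_ext f g x0 : (forall s, f s = g s) -> ccont f x0 -> ccont g x0.
Proof. intros H Hf. replace g with f; auto. apply functional_extensionality; auto. Qed.

Lemma Cpow_m1_odd P : Nat.Odd P -> Cpow (RtoC (-1)) P = RtoC (-1).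
Proof. intros [k Hk]. subst. rewrite <- RtoC_pow. f_equal. replace (2 * k + 1)%nat with (S (2 * k)) by lia. apply pow_1_odd. Qed.

Lemma RtoC_m1 : RtoC (-1) = Copp (RtoC 1).
Proof. apply injective_projections; simpl; lra. Qed.

Lemma den_nz w l P : Cmod w < 1 -> Nat.Odd P -> Cminus (RtoC 1) (Cpow (Cmult (RtoC (-1)) (Cpow w l)) P) <> RtoC 0.
Proof.
  intros Hw HP. rewrite Cpow_mul_l, Cpow_m1_odd by auto. rewrite Cpow_pow.
  destruct l.
  - simpl. intros Hc. apply (f_equal fst) in Hc. simpl in Hc. lra.
  - intros Hc. assert (Hz : Cpow w (S l * P) = RtoC (-1)).
    { transitivity (Cminus (Cminus (RtoC 1) (Cmult (RtoC (-1)) (Cpow w (S l * P)))) (RtoC 1)).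
      rewrite RtoC_m1. ring. rewrite Hc, RtoC_m1. ring. }
    apply (f_equal Cmod) in Hz. rewrite Cmod_pow, RtoC_m1, Cmod_m1 in Hz.
    destruct HP as [k Hk]. subst P.
    assert (Cmod w ^ (S l * (2 * k + 1)) < 1). apply pow_lt_1_compat. split; auto. apply Cmod_ge_0. lia.
    lra.
Qed.

Definition Kc (L : C) (n l : nat) : C :=
  Cmult (RtoC (Binomial.C n l)) (Cmult (Cpow (RtoC (-1)) l) (Cpow (Cinv (Cminus (RtoC 1) (cexp L))) n)).

Lemma qint_expand L n y : Cpow (qint L y) n = fsum (S n) (fun l => Cmult (Kc L n l) (Cpow (qpow L y) l)).
Proof.
  unfold qint, Cdiv. rewrite Cpow_mul_l.
  replace (Cminus (RtoC 1) (qpow L y)) with (Cplus (RtoC 1) (Cmult (RtoC (-1)) (qpow L y))) by (rewrite RtoC_m1; ring).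
  rewrite Cbinom. rewrite Cmult_comm, fsum_scal. apply fsum_ext. intros l _. unfold Kc. rewrite Cpow_mul_l. ring.
Qed.

Lemma qEulerChi_closed L r (chi : nat -> C) P n x :
  Re L < 0 -> (0 < P)%nat -> Nat.Odd P -> (forall m, chi (m + P)%nat = chi m) ->
  qEulerChi L r chi n x = Cmult (Cpow (qint L 2) r)
    (fsum (S n) (fun l => Cmult (Cmult (Kc L n l) (Cpow (qpow L x) l))
       (Cpow (Tser chi P (Cmult (RtoC (-1)) (Cpow (cexp L) l))) r))).
Proof.
  intros HL HP HPo Hper. unfold qEulerChi. f_equal. apply lim_left1_eq.
  replace (fun y => Cpow (qint L y) n) with (fun y => fsum (S n) (fun l => Cmult (Kc L n l) (Cpow (qpow L y) l)))
    by (apply functional_extensionality; intros; symmetry; apply qint_expand).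
  pose proof (Cmod_cexpL L HL) as Hw.
  set (H := fun s => fsum (S n) (fun l => Cmult (Cmult (Kc L n l) (Cpow (qpow L x) l))
       (Cpow (Tser chi P (Cmult (RtoC (-s)) (Cpow (cexp L) l))) r))).
  apply (filterlim_ext_loc H).
  { exists (mkposreal 1 Rlt_0_1). intros y Hy Hy1. change (Rabs (y - 1) < 1) in Hy.
    apply Rabs_def2 in Hy. unfold H. symmetry. apply msum_exp; auto. lra. lra. apply qpow_add. }
  apply (ccont_limit H).
  apply ccont_fsum. intros l. apply ccont_mult. apply ccont_const. apply ccont_pow.
  unfold Tser, Cdiv. apply ccont_mult.
  - apply ccont_fsum. intros a. apply ccont_mult. apply ccont_const. apply ccont_pow.
    apply ccont_mult. 2: apply ccont_const.
    apply (ccont_ext (fun s => Cmult (RtoC (-1)) (RtoC s))). intros s. rewrite <- RtoC_mult. f_equal; ring.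
    apply ccont_mult. apply ccont_const. apply ccont_RtoC.
  - apply ccont_inv.
    + apply ccont_plus. apply ccont_const. apply (ccont_ext (fun s => Cmult (RtoC (-1)) (Cpow (Cmult (RtoC (-s)) (Cpow (cexp L) l)) P))).
      intros; ring. apply ccont_mult. apply ccont_const. apply ccont_pow. apply ccont_mult. 2: apply ccont_const.
      apply (ccont_ext (fun s => Cmult (RtoC (-1)) (RtoC s))). intros s. rewrite <- RtoC_mult. f_equal; ring.
      apply ccont_mult. apply ccont_const. apply ccont_RtoC.
    + apply den_nz; auto.
Qed.
Lemma Cpow_opp_odd z P : Nat.Odd P -> Cpow (Copp z) P = Copp (Cpow z P).
Proof.
  intros HP. replace (Copp z) with (Cmult (RtoC (-1)) z) by (rewrite RtoC_m1; ring).
  rewrite Cpow_mul_l, Cpow_m1_odd by auto. rewrite RtoC_m1. ring.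
Qed.

Lemma Tser_simpl (chi : nat -> C) f z : Nat.Odd f ->
  Tser chi f (Cmult (RtoC (-1)) z) = Cmult (fsum f (fun a => Cmult (chi a) (Cpow (Copp z) a))) (Cinv (Cplus (RtoC 1) (Cpow z f))).
Proof.
  intros Hf. unfold Tser, Cdiv. replace (Cmult (RtoC (-1)) z) with (Copp z) by (rewrite RtoC_m1; ring).
  rewrite Cpow_opp_odd by auto. f_equal. f_equal. ring.
Qed.

Lemma one_plus_nz z : Cmod z < 1 -> Cplus (RtoC 1) z <> RtoC 0.
Proof.
  intros Hz Hc. assert (z = Copp (RtoC 1)) by (transitivity (Cminus (Cplus (RtoC 1) z) (RtoC 1)); [ring| rewrite Hc; ring]).
  subst. rewrite Cmod_m1 in Hz. lra.
Qed.
Lemma one_minus_nz z : Cmod z < 1 -> Cminus (RtoC 1) z <> RtoC 0.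
Proof.
  intros Hz Hc. assert (z = RtoC 1) by (transitivity (Cminus (RtoC 1) (Cminus (RtoC 1) z)); [ring| rewrite Hc; ring]).
  subst. rewrite Cmod_1 in Hz. lra.
Qed.

Theorem theorem5 (L : C) (r n f : nat) (x : R) (chi : nat -> C) :
  Re L < 0 ->                                   (* |q| < 1, q = cexp L *)
  (1 <= r)%nat ->
  (forall k : nat, x <> - INR k) ->
  has_conductor f chi ->
  Nat.Odd f ->
  qEulerChi L r chi n x =
    Cmult (Cpow (qint L (INR f)) n)
     (Cmult (Cpow (Cdiv (qint L 2) (qint (Cmult (RtoC (INR f)) L) 2)) r)
       (fmsum chi f r (fun t =>
          Cmult (RtoC ((-1) ^ t))
                (qEuler (Cmult (RtoC (INR f)) L) r n ((x + INR t) / INR f)))))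
  /\
  qEulerChi L r chi n x =
    Cmult (Cdiv (Cpow (qint L 2) r) (Cpow (Cminus (RtoC 1) (cexp L)) n))
     (fsum (S n) (fun l =>
        Cmult (RtoC (Binomial.C n l))
         (Cmult (Cpow (Copp (qpow L x)) l)
           (fmsum chi f r (fun t =>
              Cdiv (Cpow (Copp (Cpow (cexp L) l)) t)
                   (Cpow (Cplus (RtoC 1) (Cpow (cexp L) (l * f))) r)))))).
Proof.
  intros HL Hr Hx Hcond Hodd.
  destruct Hcond as [[Hf0 [Hper _]] _].
  pose proof (qEulerChi_closed L r chi f n x HL Hf0 Hodd Hper) as HC.
  pose proof (Cmod_cexpL L HL) as Hq.
  set (q := cexp L) in *.
  assert (Hq1 : Cminus (RtoC 1) q <> RtoC 0) by (apply one_minus_nz; auto).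
  assert (HQ : forall l, Cplus (RtoC 1) (Cpow q (l * f)) <> RtoC 0).
  { intros l. destruct (l * f)%nat eqn:E.
    - simpl. intros Hc. apply (f_equal fst) in Hc. simpl in Hc. lra.
    - apply one_plus_nz. rewrite Cmod_pow. apply pow_lt_1_compat. split; auto. apply Cmod_ge_0. lia. }
  assert (Hfpos : 0 < INR f) by (apply lt_0_INR; auto).
  set (W := cexp (Cmult (RtoC (INR f)) L)).
  assert (HW : W = Cpow q f) by (unfold W, q; apply cexp_nat).
  assert (HLf : Re (Cmult (RtoC (INR f)) L) < 0) by (rewrite re_scal_l; nra).
  assert (HWm : Cmod W < 1) by (apply Cmod_cexpL; auto).
  assert (HW1 : Cminus (RtoC 1) W <> RtoC 0) by (apply one_minus_nz; auto).
  assert (HZ2 : qint (Cmult (RtoC (INR f)) L) 2 <> RtoC 0).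
  { unfold qint, Cdiv. apply Cmult_neq_0.
    - replace (qpow (Cmult (RtoC (INR f)) L) 2) with (Cpow W 2).
      apply one_minus_nz. rewrite Cmod_pow. apply pow_lt_1_compat. split; auto. apply Cmod_ge_0. lia.
      unfold qpow, W. replace (RtoC 2) with (RtoC (INR 2)) by (f_equal; simpl; ring). symmetry; apply cexp_nat.
    - intros Hc. apply HW1. rewrite <- (Cmult_1_l (Cminus (RtoC 1) W)).
      rewrite <- (Cinv_r (Cminus (RtoC 1) W)) by auto. fold W in Hc. rewrite Hc. ring. }
  assert (HE : forall y, qEuler (Cmult (RtoC (INR f)) L) r n y =
     Cmult (Cpow (qint (Cmult (RtoC (INR f)) L) 2) r)
    (fsum (S n) (fun l => Cmult (Cmult (Kc (Cmult (RtoC (INR f)) L) n l) (Cpow (qpow (Cmult (RtoC (INR f)) L) y) l))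
       (Cpow (Cinv (Cplus (RtoC 1) (Cpow W l))) r)))).
  { intros y. unfold qEuler. rewrite (qEulerChi_closed _ r (fun _ => RtoC 1) 1 n y HLf).
    2: lia. 2: exists 0%nat; lia. 2: auto.
    f_equal. apply fsum_ext. intros l _. f_equal. f_equal.
    unfold Tser, Cdiv, fsum. simpl. fold W. rewrite RtoC_m1. field.
    replace (Cminus (RtoC 1) (Cmult (Copp (RtoC 1)) (Cmult (Cpow W l) (RtoC 1)))) with (Cplus (RtoC 1) (Cpow W l)) by ring.
    destruct l. simpl. intros Hc. apply (f_equal fst) in Hc. simpl in Hc. lra.
    apply one_plus_nz. rewrite Cmod_pow. apply pow_lt_1_compat. split; auto. apply Cmod_ge_0. lia. }
  split.
  - rewrite (fmsum_ext chi f r _ (fun t => fsum (S n) (fun l =>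
        Cmult (Cmult (Cpow (qint (Cmult (RtoC (INR f)) L) 2) r)
          (Cmult (Cmult (Kc (Cmult (RtoC (INR f)) L) n l) (Cpow (qpow L x) l))
            (Cpow (Cinv (Cplus (RtoC 1) (Cpow W l))) r)))
          (Cpow (Copp (Cpow q l)) t)))).
    2: { intros t. rewrite HE.
         assert (Hqp : qpow (Cmult (RtoC (INR f)) L) ((x + INR t) / INR f) = Cmult (qpow L x) (Cpow q t)).
         { unfold qpow at 1. rewrite Cmult_assoc, <- RtoC_mult.
           replace ((x + INR t) / INR f * INR f) with (x + INR t) by (field; lra).
           apply qpow_add. }
         rewrite Hqp. rewrite fsum_scal, fsum_scal. apply fsum_ext. intros l _.
         rewrite Cpow_mul_l, !Cpow_pow, RtoC_pow.
         replace (Copp (Cpow q l)) with (Cmult (RtoC (-1)) (Cpow q l)) by (rewrite RtoC_m1; ring).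
         rewrite Cpow_mul_l, Cpow_pow, Nat.mul_comm. ring. }
    rewrite fmsum_fsum.
    rewrite (fsum_ext (S n) _ (fun l => Cmult (Cmult (Cpow (qint (Cmult (RtoC (INR f)) L) 2) r)
          (Cmult (Cmult (Kc (Cmult (RtoC (INR f)) L) n l) (Cpow (qpow L x) l))
            (Cpow (Cinv (Cplus (RtoC 1) (Cpow W l))) r)))
          (Cpow (fsum f (fun a => Cmult (chi a) (Cpow (Copp (Cpow q l)) a))) r)))
      by (intros; apply fmsum_geom).
    rewrite HC. rewrite !fsum_scal. apply fsum_ext. intros l _.
    rewrite Tser_simpl, Cpow_pow by auto.
    rewrite HW, Cpow_pow, (Nat.mul_comm f l).
    replace (qint L (INR f)) with (Cmult (Cminus (RtoC 1) W) (Cinv (Cminus (RtoC 1) q))) by reflexivity.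
    unfold Kc. unfold Cdiv.
    set (S0 := fsum f (fun a => Cmult (chi a) (Cpow (Copp (Cpow q l)) a))).
    set (D := Cplus (RtoC 1) (Cpow q (l * f))).
    set (Z2 := qint (Cmult (RtoC (INR f)) L) 2).
    set (Z1 := qint L 2).
    unfold S0, D, Z2, Z1. unfold W, q in *.
    rewrite !Cpow_mul_l.
    rewrite (Cpow_inv (Cminus (RtoC 1) (cexp L)) n Hq1).
    rewrite (Cpow_inv (qint (Cmult (RtoC (INR f)) L) 2) r HZ2).
    rewrite (Cpow_inv (Cminus (RtoC 1) (cexp (Cmult (RtoC (INR f)) L))) n HW1).
    rewrite (Cpow_inv (Cplus (RtoC 1) (Cpow (cexp L) (l * f))) r (HQ l)).
    field. repeat split; apply Cpow_nz; auto.
  - rewrite HC. unfold Cdiv at 1.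
    rewrite (fsum_scal (S n) _ (Cpow (qint L 2) r)), fsum_scal.
    apply fsum_ext. intros l _.
    rewrite (fmsum_ext chi f r _ (fun t => Cmult (Cinv (Cpow (Cplus (RtoC 1) (Cpow q (l * f))) r)) (Cpow (Copp (Cpow q l)) t)))
      by (intros; unfold Cdiv; ring).
    rewrite fmsum_geom, Tser_simpl, Cpow_pow by auto.
    unfold Kc.
    set (S0 := fsum f (fun a => Cmult (chi a) (Cpow (Copp (Cpow q l)) a))).
    set (D := Cplus (RtoC 1) (Cpow q (l * f))).
    rewrite (Cpow_mul_l S0 (Cinv D) r).
    replace (Copp (qpow L x)) with (Cmult (RtoC (-1)) (qpow L x)) by (rewrite RtoC_m1; ring).
    rewrite (Cpow_mul_l (RtoC (-1)) (qpow L x) l).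
    rewrite !Cpow_inv by (unfold D; auto).
    unfold q, D, S0. field. split. apply Cpow_nz; auto. apply Cpow_nz; unfold D; auto.
Qed.
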